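(* Let $G$ and $H$ be connected bipartite circulant graphs on $2n$ and $2m$ vertices respectively, where $\gcd(n,m) = 1$. Then $G \otimes H$ is a circulant graph.
   Context: Graphs have no multiple edges but may have loops. The tensor product $G \otimes H$ of graphs $G$ and $H$ has vertex set $V(G)\times V(H)$, with $(g,h)$ adjacent to $(g',h')$ if and only if $g$ is adjacent to $g'$ in $G$ and $h$ is adjacent to $h'$ in $H$. For an integer $N\ge 1$ and a set $S$ of integers, the circulant graph $C_NS$ has vertex set $\{0,\dots,N-1\}$, with $i$ adjacent to $j$ iff $i-j \equiv \pm s \pmod N$ for some $s\in S$; a graph is circulant if it is isomorphic to some $C_NS$ (this includes disconnected graphs); equivalently, if it has an automorphism that permutes all its vertices in a single cycle. *)

(* Defs.v *)
From mathcomp Require Import all_boot all_order all_algebra.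
Set Implicit Arguments. Unset Strict Implicit. Unset Printing Implicit Defensive.
Import GRing.Theory Num.Theory.

(* A graph (no multiple edges, loops allowed) is a symmetric relation
   on a finite vertex type. *)
Definition is_graph (T : finType) (e : rel T) : Prop := symmetric e.

Definition circ_adj (N : nat) (S : pred int) (i j : nat) : Prop :=
  exists s : int, S s /\
    (((i%:Z - j%:Z) = s %[mod N%:Z])%Z \/ ((i%:Z - j%:Z) = - s %[mod N%:Z])%Z).

Definition circulant (T : finType) (e : rel T) : Prop :=
  exists (N : nat) (S : pred int) (phi : T -> 'I_N),
    bijective phi /\ forall x y, e x y <-> @circ_adj N S (phi x) (phi y).

Definition gconnected (T : finType) (e : rel T) : Prop :=
  forall x y : T, connect e x y.

Definition bipartite (T : finType) (e : rel T) : Prop :=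
  exists A : {set T}, forall x y, e x y -> (x \in A) != (y \in A).

Definition tensor (T U : finType) (eG : rel T) (eH : rel U) : rel (T * U) :=
  fun p q => eG p.1 q.1 && eH p.2 q.2.

(* Main.v *)
Require Import Defs.
From mathcomp Require Import all_boot all_order all_algebra.
From mathcomp Require Import zify.
From Stdlib Require Import Classical.
Import GRing.Theory Num.Theory.

Lemma modzP (a b N : int) :
  (a = b %[mod N])%Z <-> exists c : int, a = (b + c * N)%R.
Proof.
split.
- move=> h. have : (a == b %[mod N])%Z by apply/eqP.
  rewrite eqz_mod_dvd => /dvdzP [c hc]. exists c. lia.
- case=> c hc. apply/eqP. rewrite eqz_mod_dvd. apply/dvdzP. exists c. lia.
Qed.

Section OneGraph.
Variables (T : finType) (e : rel T) (n : nat) (S : pred int).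
Variables (phi : T -> 'I_(2*n)) (g : 'I_(2*n) -> T).
Hypotheses (hn : (0 < n)%N) (phiK : cancel phi g) (gK : cancel g phi).
Hypothesis he : forall x y, e x y <-> @circ_adj (2*n) S (phi x) (phi y).

Local Notation N := (Posz (2*n)%N).

Definition Gd (d : int) :=
  exists s, S s /\ ((d = s %[mod N])%Z \/ (d = - s %[mod N])%Z).

Lemma Gd_mod d d' : (d = d' %[mod N])%Z -> Gd d -> Gd d'.
Proof. by move=> h [s [hs hd]]; exists s; split=> //; rewrite -h. Qed.

Lemma Gd_opp d : Gd d -> Gd (- d)%R.
Proof.
case=> s [hs [h|h]]; exists s; split=> //; [right|left];
  move/modzP: h => [c hc]; apply/modzP; exists (-c)%R; lia.
Qed.

Lemma Npos : (0 < N)%R.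
Proof. lia. Qed.

Lemma rlt (z : int) : (`|(z %% N)%Z|%N < 2 * n)%N.
Proof. have h1 := ltz_pmod z Npos. have h2 : (0 <= z %% N)%Z%R by apply: modz_ge0; lia. lia. Qed.

Definition VZ z := g (Ordinal (rlt z)).

Lemma VZ_edge z w : e (VZ z) (VZ w) <-> Gd (z - w)%R.
Proof.
rewrite he /VZ !gK /circ_adj /=.
have E : (Posz (`|(z %% N)%Z|%N) - Posz (`|(w %% N)%Z|%N) = z - w %[mod N])%Z%R.
  apply/modzP.
  have h1 := ltz_pmod z Npos. have h2 : (0 <= z %% N)%Z%R by apply: modz_ge0; lia.
  have h3 := ltz_pmod w Npos. have h4 : (0 <= w %% N)%Z%R by apply: modz_ge0; lia.
  have hz := divz_eq z N. have hw := divz_eq w N.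
  move: h1 h2 h3 h4 hz hw.
  move: (z %/ N)%Z (w %/ N)%Z (z %% N)%Z (w %% N)%Z => a b c d h1 h2 h3 h4 hz hw.
  exists (b - a)%R. lia.
by rewrite /Gd E.
Qed.

Lemma VZ_inj z w : VZ z = VZ w -> (z = w %[mod N])%Z.
Proof.
move=> /(can_inj gK) /(congr1 val) /= h.
have h2 : (0 <= z %% N)%Z%R by apply: modz_ge0; lia.
have h4 : (0 <= w %% N)%Z%R by apply: modz_ge0; lia.
rewrite /=. lia.
Qed.

Lemma Gd_phi x y : e x y -> Gd (Posz (phi x) - Posz (phi y))%R.
Proof. by move/he. Qed.

Hypotheses (hcon : gconnected e) (A : {set T})
  (hA : forall x y, e x y -> (x \in A) != (y \in A)).

Lemma Gd_odd d : Gd d -> (d %% 2)%Z = 1%R.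
Proof.
move=> hd.
have hd2 : (d %% 2)%Z = 0%R \/ (d %% 2)%Z = 1%R by lia.
case: hd2 => [hd0|//]; exfalso.
pose f z := VZ z \in A.
have step t : Gd t -> forall z, f (z + t)%R = ~~ f z.
  move=> ht z. have : e (VZ (z + t)%R) (VZ z).
    apply/VZ_edge. by have -> : (z + t - z = t)%R by lia.
  move/hA. rewrite /f. by case: (VZ (z + t)%R \in A); case: (VZ z \in A).
have iter t : Gd t -> forall k : nat, forall z, f (z + t * Posz k)%R = f z (+) odd k.
  move=> ht; elim=> [|k IH] z.
    have -> : (z + t * Posz 0 = z)%R by lia. by rewrite addbF.
  have -> : (z + t * Posz k.+1 = (z + t * Posz k) + t)%R by lia.
  by rewrite step // IH /= addbN.
have [t [ht todd]] : exists t, Gd t /\ (t %% 2)%Z = 1%R.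
  apply: NNPP => hno.
  have H0 : forall t, Gd t -> (t %% 2)%Z = 0%R.
    move=> t ht. have : (t %% 2)%Z = 0%R \/ (t %% 2)%Z = 1%R by lia.
    case=> // h1; exfalso; apply: hno; by exists t.
  pose a := [pred x : T | ((Posz (phi x) %% 2)%Z == 0%R)].
  have cl : closed e a.
    move=> x y exy. have := H0 _ (Gd_phi x y exy). rewrite /a /= => h.
    apply/eqP/eqP => h'; lia.
  have o1 : (1 < 2 * n)%N by lia.
  have := closed_connect cl (hcon (g (Ordinal (ltn_trans (ltnSn 0) o1))) (g (Ordinal o1))).
  by rewrite /a !inE !gK.
have ht' : Gd (Posz `|t|%N).
  have [->|->] : (Posz `|t|%N = t \/ Posz `|t|%N = - t)%R by lia.
    exact: ht. exact: Gd_opp.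
have hd' : Gd (Posz `|d|%N).
  have [->|->] : (Posz `|d|%N = d \/ Posz `|d|%N = - d)%R by lia.
    exact: hd. exact: Gd_opp.
have ot : odd `|t|%N.
  have : (`|t| %% 2 = 1)%N by lia.
  by rewrite modn2; case: odd.
have od : ~~ odd `|d|%N.
  have : (`|d| %% 2 = 0)%N by lia.
  by rewrite modn2; case: odd.
have := iter _ ht' `|d|%N 0%R. have := iter _ hd' `|t|%N 0%R.
rewrite ot (negbTE od) mulrC => ->. by case: (f 0%R).
Qed.

End OneGraph.

Theorem theorem10 (T U : finType) (eG : rel T) (eH : rel U) (n m : nat) :
  is_graph eG -> is_graph eH ->
  #|T| = (2 * n)%N -> #|U| = (2 * m)%N -> coprime n m ->
  gconnected eG -> gconnected eH ->
  bipartite eG -> bipartite eH ->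
  circulant eG -> circulant eH ->
  circulant (tensor eG eH).
Proof.
move=> _ _ cT cU cop conG conH [A hA] [B hB] [NG [SG [phiG [bG heG]]]]
  [NH [SH [phiH [bH heH]]]].
have eNG : NG = (2 * n)%N by rewrite -cT (bij_eq_card bG) card_ord.
have eNH : NH = (2 * m)%N by rewrite -cU (bij_eq_card bH) card_ord.
subst NG NH.
have [n0|hn] := posnP n.
  exists #|{: T * U}|, (fun _ => false), enum_rank; split; first exact: enum_rank_bij.
  move=> x y; split => [_|[s [//]]].
  have : #|T| = 0%N by rewrite cT n0.
  by move/card0_eq/(_ x.1); rewrite !inE.
have [m0|hm] := posnP m.
  exists #|{: T * U}|, (fun _ => false), enum_rank; split; first exact: enum_rank_bij.
  move=> x y; split => [_|[s [//]]].
  have : #|U| = 0%N by rewrite cU m0.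
  by move/card0_eq/(_ x.2); rewrite !inE.
case: bG => gG phiGK gGK. case: bH => gH phiHK gHK.
pose Nt := (2 * (2 * (n * m)))%N.
pose q (k : 'I_Nt) := Posz (k %/ 2)%N.
pose ep (k : 'I_Nt) := Posz (k %% 2)%N.
pose psi (k : 'I_Nt) := (VZ T n gG hn (q k), VZ U m gH hm (q k + ep k)%R).
have cop' : coprimez (Posz m) (Posz n) by rewrite coprimezE /= coprime_sym.
have psi_inj : injective psi.
  move=> k k' [/(VZ_inj T n phiG gG hn gGK _ _) h1 /(VZ_inj U m phiH gH hm gHK _ _) h2].
  move/modzP: h1 => [a ha]; move/modzP: h2 => [b hb].
  have lk := ltn_ord k; have lk' := ltn_ord k'.
  rewrite /q /ep in ha hb.
  have ee : (k %% 2 = k' %% 2)%N by lia.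
  have hdiv : (Posz m %| a)%Z.
    rewrite -(Gauss_dvdzr _ cop'). apply/dvdzP; exists b. lia.
  case/dvdzP: hdiv => c hc.
  have eq : (Posz (k %/ 2) = Posz (k' %/ 2))%R.
    have [h|[h|h]] : (c <= -1 \/ c = 0 \/ 1 <= c)%R by lia.
    - nia.
    - lia.
    - nia.
  apply: val_inj => /=. lia.
have psi_bij : bijective psi.
  apply: (inj_card_bij psi_inj). rewrite card_prod cT cU card_ord. lia.
case: psi_bij => phi psiK phiK.
pose X := fun x : int => [&& (x %% 2 == 0)%Z,
   eG (VZ T n gG hn (x %/ 2)%Z) (VZ T n gG hn 0%R) &
   eH (VZ U m gH hm (x %/ 2)%Z) (VZ U m gH hm 0%R)].
exists Nt, X, phi; split; first by exists psi.
suff key : forall k k', tensor eG eH (psi k) (psi k') <-> @circ_adj Nt X k k'.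
  by move=> x y; have := key (phi x) (phi y); rewrite !phiK.
move=> k k'. rewrite /tensor /=.
have EG := VZ_edge T eG n SG phiG gG hn gGK heG.
have EH := VZ_edge U eH m SH phiH gH hm gHK heH.
have oddG := Gd_odd T eG n SG phiG gG hn gGK heG conG A hA.
have oddH := Gd_odd U eH m SH phiH gH hm gHK heH conH B hB.
have lk := ltn_ord k; have lk' := ltn_ord k'.
split.
- case/andP => /EG g1 /EH h1.
  have o1 := oddG _ g1; have o2 := oddH _ h1.
  have ee : ep k = ep k' by rewrite /ep /q in o1 o2 *; lia.
  exists (2 * (q k - q k'))%R. split.
  + apply/and3P; split.
    * apply/eqP; lia.
    * apply/EG. have -> : (((2 * (q k - q k')) %/ 2)%Z - 0 = q k - q k')%R by lia.
      exact: g1.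
    * apply/EH. have -> : (((2 * (q k - q k')) %/ 2)%Z - 0 = q k + ep k - (q k' + ep k'))%R.
        rewrite ee; lia.
      exact: h1.
  + left. have -> : (Posz k - Posz k' = 2 * (q k - q k'))%R.
      rewrite /q /ep in ee *; lia.
    by [].
- case=> x [/and3P [/eqP x2 /EG g1 /EH h1] hx].
  rewrite subr0 in g1; rewrite subr0 in h1.
  have hxd : x = (2 * (x %/ 2)%Z)%R by lia.
  move: (x %/ 2)%Z hxd g1 h1 => d hxd g1 h1.
  have [d' [gd [hd [c hk]]]] : exists d', Gd n SG d' /\ Gd m SH d' /\
      exists c, (Posz k - Posz k' = 2 * d' + c * Posz Nt)%R.
    case: hx => /modzP [c hc].
    + exists d; split; first exact: g1. split; first exact: h1.
      exists c; lia.
    + exists (- d)%R; split; first exact: Gd_opp. split; first exact: Gd_opp.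
      exists c; lia.
  suff [H1 H2] : (d' = q k - q k' %[mod Posz (2 * n)])%Z /\
                 (d' = q k + ep k - (q k' + ep k') %[mod Posz (2 * m)])%Z.
    by apply/andP; split; [apply/EG; exact: (Gd_mod n SG d') |
                           apply/EH; exact: (Gd_mod m SH d')].
  have kq : (Posz k = 2 * q k + ep k)%R by rewrite /q /ep; lia.
  have kq' : (Posz k' = 2 * q k' + ep k')%R by rewrite /q /ep; lia.
  have e01 : (0 <= ep k <= 1)%R by rewrite /ep; lia.
  have e01' : (0 <= ep k' <= 1)%R by rewrite /ep; lia.
  have eNt : Posz Nt = (4 * (Posz n * Posz m))%R by rewrite /Nt; lia.
  rewrite eNt in hk.
  clear X EG EH oddG oddH lk lk' g1 h1 hx x2 hxd gd hd psiK phiK psi_inj phi.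
  move: (q k) (q k') (ep k) (ep k') kq kq' e01 e01' hk
    => a a' b b' kq kq' e01 e01' hk.
  have ee : b = b' by lia.
  have e2 : (d' = a - a' - 2 * (c * (Posz n * Posz m)))%R by lia.
  split.
  + apply/modzP. exists (- (c * Posz m))%R. rewrite e2. lia.
  + apply/modzP. exists (- (c * Posz n))%R. rewrite e2 ee. lia.
Qed.
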